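(* Let $c,d>0$, $r\in(0,1)$ and $m\in\mathbb{Z}$. Then for every $x\in\mathbb{C}\setminus[-d,c]$, $$\lim_{p\to\infty}\frac{\hat P_{p+m}(x;0,0,c,d;r^{1/p})}{\hat P_p(x;0,0,c,d;r^{1/p})}=\big(cdr(1-r)\big)^{m/2}\rho^m\!\left(\frac{x-r(c-d)}{2\sqrt{rcd(1-r)}}\right),$$ where $\rho(y)=y+\sqrt{y^2-1}$ with the branch of the square root chosen so that $|\rho(y)|>1$ for $y\notin[-1,1]$.
   Context: For base $q\in(0,1)$, the monic polynomials $\hat P_n(x;0,0,c,d;q)$ are defined by $\hat P_{-1}=0$, $\hat P_0=1$, $x\hat P_n=\hat P_{n+1}+q^n(c-d)\hat P_n+q^{n-1}cd(1-q^n)\hat P_{n-1}$. *)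

(* Defs.v *)
From Stdlib Require Import Reals ZArith.
From Coquelicot Require Import Coquelicot.
Open Scope R_scope.

(* Pair (P_{n-1}, P_n) for the monic polynomials \hat P_n(x;0,0,c,d;q):
   P_{-1} = 0, P_0 = 1,
   P_{n+1} = (x - q^n (c-d)) P_n - q^(n-1) c d (1-q^n) P_{n-1}. *)
Fixpoint Phat_pair (c d q : R) (x : C) (n : nat) : C * C :=
  match n with
  | O => (RtoC 0, RtoC 1)
  | S k =>
      let (pm, pk) := Phat_pair c d q x k in
      (pk, Cminus (Cmult (Cminus x (RtoC (q ^ k * (c - d)))) pk)
                  (Cmult (RtoC (q ^ (k - 1) * c * d * (1 - q ^ k))) pm))
  end.

Definition Phat (c d q : R) (x : C) (n : nat) : C := snd (Phat_pair c d q x n).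

Definition Cpowz (w : C) (m : Z) : C :=
  match m with
  | Z0 => RtoC 1
  | Zpos k => Cpow w (Pos.to_nat k)
  | Zneg k => Cinv (Cpow w (Pos.to_nat k))
  end.

(* \hat P_{p+m} for integer m (only meaningful, and only used, for p + m >= 0) *)
Definition Phat_shift (c d q : R) (x : C) (p : nat) (m : Z) : C :=
  Phat c d q x (Z.to_nat (Z.of_nat p + m)).

(* Main.v *)
Require Import Defs.
From Stdlib Require Import Reals ZArith Lra Lia Psatz.
From Coquelicot Require Import Coquelicot.
Open Scope R_scope.


Section Core.
Variables (A B wp wm : C).
Hypothesis HA : Cplus wp wm = A.
Hypothesis HB : Cmult wp wm = B.
Hypothesis Hlt : Cmod wm < Cmod wp.

Definition zf (v : C) : C := Cdiv (Cminus v wp) (Cminus v wm).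

Lemma wp_neq0 : wp <> RtoC 0.
Proof. intro E. rewrite E, Cmod_0 in Hlt. pose proof (Cmod_ge_0 wm). lra. Qed.

Lemma wpm_neq : Cminus wp wm <> RtoC 0.
Proof.
  intro E. assert (H : wp = Cplus (Cminus wp wm) wm) by (apply injective_projections; simpl; ring).
  rewrite E, Cplus_0_l in H. rewrite H in Hlt. lra.
Qed.

Lemma sub_neq0 u v : 0 < Cmod (Cminus u v) -> Cminus u v <> RtoC 0.
Proof. intros H E. rewrite E, Cmod_0 in H. lra. Qed.

Lemma z_bound (eta : R) v : 0 < eta -> eta <= Cmod (Cminus v wm) ->
  Cmod (zf v) <= 1 + Cmod (Cminus wp wm) / eta.
Proof.
  intros He H. assert (Hn : Cminus v wm <> RtoC 0) by (apply sub_neq0; lra).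
  unfold zf.
  replace (Cdiv (Cminus v wp) (Cminus v wm)) with
     (Cminus (RtoC 1) (Cdiv (Cminus wp wm) (Cminus v wm))) by (field; auto).
  eapply Rle_trans. { unfold Cminus. apply Cmod_triangle. }
  rewrite Cmod_opp, Cmod_1, Cmod_div by auto.
  apply Rplus_le_compat_l. unfold Rdiv. apply Rmult_le_compat_l. apply Cmod_ge_0.
  apply Rinv_le_contravar; auto.
Qed.

Lemma z_T v : v <> RtoC 0 -> Cminus v wm <> RtoC 0 ->
  Cminus (Cminus A (Cdiv B v)) wm <> RtoC 0 ->
  zf (Cminus A (Cdiv B v)) = Cmult (Cdiv wm wp) (zf v).
Proof.
  intros H1 H2 H3. pose proof wp_neq0. unfold zf. rewrite <- HA, <- HB in *.
  field. repeat split; auto.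
  intro E. apply H3.
  replace (Cminus (Cminus (Cplus wp wm) (Cdiv (Cmult wp wm) v)) wm) with
    (Cdiv (Cminus (Cminus (Cmult (Cplus wp wm) v) (Cmult wp wm)) (Cmult wm v)) v) by (field; auto).
  rewrite E. field; auto.
Qed.

Lemma z_pert u e : Cminus (Cplus u e) wm <> RtoC 0 -> Cminus u wm <> RtoC 0 ->
  Cmod (Cminus (zf (Cplus u e)) (zf u)) =
  Cmod (Cminus wp wm) * Cmod e / (Cmod (Cminus (Cplus u e) wm) * Cmod (Cminus u wm)).
Proof.
  intros H1 H2. unfold zf.
  replace (Cminus (Cdiv (Cminus (Cplus u e) wp) (Cminus (Cplus u e) wm))
                  (Cdiv (Cminus u wp) (Cminus u wm)))
   with (Cdiv (Cmult (Cminus wp wm) e) (Cmult (Cminus (Cplus u e) wm) (Cminus u wm)))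
   by (field; auto).
  rewrite Cmod_div by (apply Cmult_neq_0; auto). rewrite !Cmod_mult. reflexivity.
Qed.

Lemma z_back v : Cminus v wm <> RtoC 0 ->
  Cmod (Cminus v wp) <= Cmod (zf v) * (Cmod (Cminus v wp) + Cmod (Cminus wp wm)).
Proof.
  intros H. unfold zf.
  replace (Cminus v wp) with (Cmult (Cdiv (Cminus v wp) (Cminus v wm)) (Cminus v wm)) at 1
    by (field; auto).
  rewrite Cmod_mult. apply Rmult_le_compat_l. apply Cmod_ge_0.
  replace (Cminus v wm) with (Cplus (Cminus v wp) (Cminus wp wm))
    by (apply injective_projections; simpl; ring).
  apply Cmod_triangle.
Qed.


Lemma core (G : nat -> nat -> C) (eta : R) :
  0 < eta ->
  (forall L, exists P, forall p idx, (P <= p)%nat -> (p <= idx + L)%nat -> (idx <= p + L)%nat ->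
       eta <= Cmod (Cminus (G p idx) wm) /\ G p idx <> RtoC 0) ->
  (forall L eps, 0 < eps -> exists P, forall p idx, (P <= p)%nat -> (p <= idx + L)%nat -> (idx <= p + L)%nat ->
       Cmod (Cminus (G p (S idx)) (Cminus A (Cdiv B (G p idx)))) < eps) ->
  forall L eps, 0 < eps -> exists P, forall p idx, (P <= p)%nat -> (p <= idx + L)%nat -> (idx <= p + L)%nat ->
       Cmod (Cminus (G p idx) wp) < eps.
Proof.
  intros Heta H1 H2 L eps Heps.
  set (D := Cmod (Cminus wp wm)).
  assert (HD : 0 < D) by (apply Cmod_gt_0, wpm_neq).
  assert (Hwp : 0 < Cmod wp) by (apply Cmod_gt_0, wp_neq0).
  set (lam := Cmod wm / Cmod wp).
  assert (Hlam : 0 <= lam < 1).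
  { unfold lam. split. apply Rle_mult_inv_pos; auto using Cmod_ge_0.
    apply Rmult_lt_reg_r with (Cmod wp); auto. unfold Rdiv. rewrite Rmult_assoc, Rinv_l by lra. lra. }
  set (Zb := 1 + D / eta).
  assert (HZb : 1 <= Zb) by (unfold Zb; assert (0 <= D/eta) by (apply Rle_mult_inv_pos; lra); lra).
  set (e1 := Rmin (1/2) (eps / (2 * D + 2))).
  assert (He1 : 0 < e1 /\ e1 <= 1/2 /\ e1 * (2*D+2) <= eps).
  { unfold e1. split; [apply Rmin_glb_lt; [lra| apply Rdiv_lt_0_compat; lra]|].
    split; [apply Rmin_l|].
    apply Rle_trans with ((eps / (2*D+2)) * (2*D+2)). apply Rmult_le_compat_r; [lra| apply Rmin_r].
    right. field. lra. }
  destruct (pow_lt_1_zero lam ltac:(rewrite Rabs_right; lra) (e1 / (2 * Zb)) ltac:(apply Rdiv_lt_0_compat; lra)) as [N HN].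
  specialize (HN N (le_n N)). rewrite Rabs_right in HN by (apply Rle_ge, pow_le; lra).
  assert (HN' : lam ^ N * Zb < e1 / 2).
  { apply Rmult_lt_compat_r with (r := Zb) in HN; [|lra].
    replace (e1 / (2 * Zb) * Zb) with (e1 / 2) in HN by (field; lra). lra. }
  set (K := 2 * D / (eta * eta)).
  assert (HK : 0 < K) by (unfold K; apply Rdiv_lt_0_compat; nra).
  set (dm := Rmin (eta / 2) ((1 - lam) * e1 / (2 * K))).
  assert (Hdm : 0 < dm /\ dm <= eta / 2 /\ K * dm <= (1 - lam) * e1 / 2).
  { unfold dm. split; [apply Rmin_glb_lt; [lra| apply Rdiv_lt_0_compat; nra]|].
    split; [apply Rmin_l|].
    apply Rle_trans with (K * ((1 - lam) * e1 / (2 * K))).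
    apply Rmult_le_compat_l; [lra| apply Rmin_r].
    right. field. lra. }
  destruct (H1 (L + N)%nat) as [P1 HP1].
  destruct (H2 (L + N)%nat dm ltac:(lra)) as [P2 HP2].
  exists (Nat.max (Nat.max P1 P2) (L + N + 1)). intros p idx Hp Hi1 Hi2.
  set (k0 := (idx - N)%nat).
  assert (Hind : forall i, (i <= N)%nat -> Cmod (zf (G p (k0 + i)%nat)) <= lam ^ i * Zb + e1 / 2).
  { induction i as [|i IH]; intros Hi.
    - simpl. rewrite Nat.add_0_r. destruct (HP1 p k0 ltac:(lia) ltac:(lia) ltac:(lia)) as [Ha Hb].
      pose proof (z_bound eta (G p k0) Heta Ha) as Hz. fold D in Hz. fold Zb in Hz. lra.
    - specialize (IH ltac:(lia)).
      destruct (HP1 p (k0 + i)%nat ltac:(lia) ltac:(lia) ltac:(lia)) as [Ha Hb].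
      destruct (HP1 p (S (k0 + i))%nat ltac:(lia) ltac:(lia) ltac:(lia)) as [Hc _].
      specialize (HP2 p (k0 + i)%nat ltac:(lia) ltac:(lia) ltac:(lia)).
      replace (k0 + S i)%nat with (S (k0 + i)) by lia.
      set (v := G p (k0 + i)%nat) in *.
      set (u := Cminus A (Cdiv B v)) in *.
      set (e := Cminus (G p (S (k0 + i))) u) in *.
      assert (Hg : G p (S (k0 + i)) = Cplus u e).
      { unfold e. apply injective_projections; simpl; ring. }
      rewrite Hg in Hc |- *.
      assert (Hu : eta / 2 <= Cmod (Cminus u wm)).
      { assert (Cmod (Cminus (Cplus u e) wm) <= Cmod (Cminus u wm) + Cmod e).
        { replace (Cminus (Cplus u e) wm) with (Cplus (Cminus u wm) e)
            by (apply injective_projections; simpl; ring). apply Cmod_triangle. }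
        lra. }
      assert (Nu : Cminus u wm <> RtoC 0) by (apply sub_neq0; lra).
      assert (Nue : Cminus (Cplus u e) wm <> RtoC 0) by (apply sub_neq0; lra).
      assert (Nv : Cminus v wm <> RtoC 0) by (apply sub_neq0; lra).
      pose proof (z_T v Hb Nv Nu) as ZT. fold u in ZT.
      assert (Hzu : Cmod (zf u) = lam * Cmod (zf v)).
      { rewrite ZT, Cmod_mult, Cmod_div by (apply wp_neq0). reflexivity. }
      pose proof (z_pert u e Nue Nu) as ZP. fold D in ZP.
      assert (Hdiff : Cmod (Cminus (zf (Cplus u e)) (zf u)) <= K * dm).
      { rewrite ZP. apply Rle_trans with (K * Cmod e); [|apply Rmult_le_compat_l; lra].
        apply Rle_trans with (D * Cmod e / (eta * (eta / 2))).
        - unfold Rdiv. apply Rmult_le_compat_l.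
          apply Rmult_le_pos; [lra| apply Cmod_ge_0].
          apply Rinv_le_contravar. nra. apply Rmult_le_compat; lra.
        - right. unfold K. field. lra. }
      assert (Ht : Cmod (zf (Cplus u e)) <= Cmod (zf u) + Cmod (Cminus (zf (Cplus u e)) (zf u))).
      { replace (zf (Cplus u e)) with (Cplus (zf u) (Cminus (zf (Cplus u e)) (zf u))) at 1
          by (apply injective_projections; simpl; ring). apply Cmod_triangle. }
      change (lam ^ S i) with (lam * lam ^ i).
      assert (lam * Cmod (zf v) <= lam * (lam ^ i * Zb + e1 / 2)) by (apply Rmult_le_compat_l; lra).
      lra. }
  assert (Hidx : (k0 + N)%nat = idx) by lia.
  specialize (Hind N (le_n N)). rewrite Hidx in Hind.
  destruct (HP1 p idx ltac:(lia) ltac:(lia) ltac:(lia)) as [Ha Hb].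
  assert (Nv : Cminus (G p idx) wm <> RtoC 0) by (apply sub_neq0; lra).
  pose proof (z_back (G p idx) Nv) as ZB. fold D in ZB.
  set (a := Cmod (Cminus (G p idx) wp)) in *.
  set (z := Cmod (zf (G p idx))) in *.
  assert (0 <= a) by apply Cmod_ge_0.
  assert (0 <= z) by apply Cmod_ge_0.
  assert (z < e1) by lra.
  destruct (Rlt_or_le a eps) as [Hlt'|Hge]; auto.
  exfalso. assert (z * (a + D) < e1 * (a + D)) by (apply Rmult_lt_compat_r; lra).
  nra.
Qed.

End Core.

Definition acoef (c d q : R) (x : C) (n : nat) : C := Cminus x (RtoC (q ^ n * (c - d))).
Definition bcoef (c d q : R) (n : nat) : R := q ^ (n - 1) * c * d * (1 - q ^ n).

Fixpoint Rat (c d q : R) (x : C) (n : nat) : C :=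
  match n with
  | O => RtoC 1
  | S k => Cminus (acoef c d q x k) (Cdiv (RtoC (bcoef c d q k)) (Rat c d q x k))
  end.

Lemma pair_fst c d q x n : fst (Phat_pair c d q x (S n)) = Phat c d q x n.
Proof. unfold Phat; simpl; destruct (Phat_pair c d q x n); reflexivity. Qed.

Lemma pair_lemma c d q x n :
  (forall j, (1 <= j)%nat -> Rat c d q x j <> RtoC 0) -> (1 <= n)%nat ->
  fst (Phat_pair c d q x n) <> RtoC 0 /\
  snd (Phat_pair c d q x n) = Cmult (Rat c d q x n) (fst (Phat_pair c d q x n)).
Proof.
  intros NZ. induction n as [|n IH]; intros Hn; [lia|].
  destruct n as [|n].
  - simpl. split.
    + intro H. injection H. lra.
    + unfold acoef, bcoef. simpl. apply injective_projections; simpl; field.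
  - specialize (IH ltac:(lia)). destruct IH as [H1 H2].
    change (Phat_pair c d q x (S (S n))) with
      (let (pm, pk) := Phat_pair c d q x (S n) in
      (pk, Cminus (Cmult (Cminus x (RtoC (q ^ (S n) * (c - d)))) pk)
                  (Cmult (RtoC (q ^ ((S n) - 1) * c * d * (1 - q ^ (S n)))) pm))).
    destruct (Phat_pair c d q x (S n)) as [pm pk]. cbv beta iota zeta delta [fst snd] in H1, H2 |- *.
    assert (NZ1 : Rat c d q x (S n) <> RtoC 0) by (apply NZ; lia).
    split.
    + rewrite H2. apply Cmult_neq_0; auto.
    + rewrite H2.
      change (Rat c d q x (S (S n))) with (Cminus (acoef c d q x (S n)) (Cdiv (RtoC (bcoef c d q (S n))) (Rat c d q x (S n)))).
      set (rr := Rat c d q x (S n)) in *. unfold acoef, bcoef.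
      replace (S n - 1)%nat with n by lia.
      field. auto.
Qed.

Lemma Phat_succ c d q x n :
  (forall j, (1 <= j)%nat -> Rat c d q x j <> RtoC 0) ->
  Phat c d q x (S n) = Cmult (Rat c d q x (S n)) (Phat c d q x n) /\ Phat c d q x n <> RtoC 0.
Proof.
  intros NZ. destruct (pair_lemma c d q x (S n) NZ ltac:(lia)) as [H1 H2].
  rewrite pair_fst in H1, H2. split; auto.
Qed.

Definition qp (r : R) (p : nat) : R := Rpower r (/ INR p).

Lemma qp_pos r p : 0 < qp r p.
Proof. unfold qp, Rpower. apply exp_pos. Qed.

Lemma qp_le1 r p : 0 < r < 1 -> qp r p <= 1.
Proof.
  intros Hr. unfold qp, Rpower. rewrite <- exp_0.
  assert (ln r < 0) by (rewrite <- ln_1; apply ln_increasing; lra).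
  assert (0 <= / INR p).
  { destruct p. simpl. rewrite Rinv_0. lra. left. apply Rinv_0_lt_compat, lt_0_INR; lia. }
  destruct (Req_dec (/ INR p * ln r) 0) as [E|E]; [rewrite E; lra|].
  left. apply exp_increasing. nra.
Qed.

Lemma qp_pow r p : 0 < r -> (1 <= p)%nat -> qp r p ^ p = r.
Proof.
  intros Hr Hp. unfold qp. rewrite <- Rpower_pow by (unfold Rpower; apply exp_pos).
  rewrite Rpower_mult. rewrite Rinv_l. apply Rpower_1; auto.
  apply not_0_INR; lia.
Qed.

Lemma qp_to1 r : 0 < r < 1 -> forall eps, 0 < eps -> exists P, forall p, (P <= p)%nat -> 1 - qp r p < eps.
Proof.
  intros Hr eps He.
  assert (Hl : ln r < 0) by (rewrite <- ln_1; apply ln_increasing; lra).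
  destruct (archimed (- ln r / eps)) as [H1 _].
  exists (S (Z.to_nat (up (- ln r / eps)))). intros p Hp.
  assert (HP : - ln r / eps < INR p).
  { apply Rlt_le_trans with (IZR (up (- ln r / eps))); auto.
    assert (0 <= up (- ln r / eps))%Z.
    { apply le_IZR. apply Rle_trans with (- ln r / eps); [|lra].
      apply Rlt_le, Rdiv_lt_0_compat; lra. }
    rewrite <- (Z2Nat.id (up _)) by lia. rewrite <- INR_IZR_INZ.
    apply le_INR. lia. }
  assert (Hp0 : 0 < INR p) by (apply lt_0_INR; lia).
  unfold qp, Rpower. pose proof (exp_ineq1_le (/ INR p * ln r)).
  assert (- ln r < eps * INR p).
  { apply Rmult_lt_compat_r with (r := eps) in HP; auto.
    unfold Rdiv in HP. rewrite Rmult_assoc, Rinv_l in HP by lra. lra. }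
  assert (/ INR p * ln r > - eps).
  { apply Rmult_lt_reg_l with (INR p); auto.
    rewrite <- Rmult_assoc, Rinv_r by lra. lra. }
  lra.
Qed.

Lemma pow_le1 q k : 0 <= q <= 1 -> q ^ k <= 1.
Proof. intros Hq. induction k; simpl; [lra|]. assert (0 <= q ^ k) by (apply pow_le; lra). nra. Qed.

Lemma bern q k : 0 <= q <= 1 -> 1 - q ^ k <= INR k * (1 - q).
Proof.
  intros Hq. induction k as [|k IH]; [simpl; lra|].
  rewrite S_INR. change (q ^ S k) with (q * q ^ k). assert (0 <= q ^ k <= 1) by (split; [apply pow_le; lra| apply pow_le1; lra]).
  nra.
Qed.

Lemma qwin r : 0 < r < 1 -> forall (L : nat) eps, 0 < eps -> exists P, forall p idx,
  (P <= p)%nat -> (p <= idx + L)%nat -> (idx <= p + L)%nat -> Rabs (qp r p ^ idx - r) < eps.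
Proof.
  intros Hr L eps He.
  destruct (qp_to1 r Hr (eps / (INR L + 1))) as [P HP].
  { apply Rdiv_lt_0_compat; auto. pose proof (pos_INR L); lra. }
  exists (S P). intros p idx H1 H2 H3.
  specialize (HP p ltac:(lia)).
  pose proof (qp_pos r p) as Q0. pose proof (qp_le1 r p Hr) as Q1.
  pose proof (qp_pow r p ltac:(lra) ltac:(lia)) as Qp.
  set (q := qp r p) in *.
  assert (HL : INR L * (1 - q) < eps).
  { assert (1 - q < eps / (INR L + 1)) by auto.
    pose proof (pos_INR L).
    apply Rmult_lt_compat_l with (r := INR L + 1) in H; [|lra].
    unfold Rdiv in H. rewrite (Rmult_comm eps), <- Rmult_assoc, Rinv_r in H by lra.
    nra. }
  destruct (le_lt_dec p idx) as [Hle|Hlt].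
  - replace idx with (p + (idx - p))%nat by lia. rewrite pow_add, Qp.
    pose proof (bern q (idx - p) ltac:(lra)).
    assert (INR (idx - p) <= INR L) by (apply le_INR; lia).
    assert (0 <= q ^ (idx - p) <= 1) by (split; [apply pow_le; lra| apply pow_le1; lra]).
    rewrite Rabs_left1 by nra. nra.
  - rewrite <- Qp. replace (q ^ p) with (q ^ idx * q ^ (p - idx)) by (rewrite <- pow_add; f_equal; lia).
    pose proof (bern q (p - idx) ltac:(lra)).
    assert (INR (p - idx) <= INR L) by (apply le_INR; lia).
    assert (0 <= q ^ (p - idx) <= 1) by (split; [apply pow_le; lra| apply pow_le1; lra]).
    assert (0 <= q ^ idx <= 1) by (split; [apply pow_le; lra| apply pow_le1; lra]).
    rewrite Rabs_right by nra. nra.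
Qed.

Lemma Rinv_nonneg z : 0 <= z -> 0 <= / z.
Proof. intros H. destruct (Req_dec z 0) as [E|E]. rewrite E, Rinv_0; lra. left; apply Rinv_0_lt_compat; lra. Qed.

Lemma im_le_Cmod z : Rabs (snd z) <= Cmod z.
Proof.
  unfold Cmod. rewrite <- sqrt_Rsqr_abs. apply sqrt_le_1. apply Rle_0_sqr.
  nra. unfold Rsqr. nra.
Qed.

Lemma re_le_Cmod' z : Rabs (fst z) <= Cmod z.
Proof. apply re_le_Cmod. Qed.

Lemma Rat_S_comp c d q x n :
  fst (Rat c d q x (S n)) = fst x - q ^ n * (c - d) - bcoef c d q n *
     (fst (Rat c d q x n) / (fst (Rat c d q x n) ^ 2 + snd (Rat c d q x n) ^ 2)) /\
  snd (Rat c d q x (S n)) = snd x + bcoef c d q n *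
     (snd (Rat c d q x n) / (fst (Rat c d q x n) ^ 2 + snd (Rat c d q x n) ^ 2)).
Proof.
  change (Rat c d q x (S n)) with (Cminus (acoef c d q x n) (Cdiv (RtoC (bcoef c d q n)) (Rat c d q x n))).
  set (g := Rat c d q x n). unfold acoef, Cminus, Cdiv, Cplus, Copp, Cmult, Cinv, RtoC. simpl.
  split; unfold Rdiv; ring.
Qed.

Lemma bcoef_nonneg c d q n : 0 < c -> 0 < d -> 0 < q <= 1 -> 0 <= bcoef c d q n.
Proof.
  intros. unfold bcoef. assert (0 <= q ^ (n - 1)) by (apply pow_le; lra).
  assert (q ^ n <= 1) by (apply pow_le1; lra). apply Rmult_le_pos; [|lra].
  apply Rmult_le_pos; [|lra]. apply Rmult_le_pos; lra.
Qed.

Lemma cplx_inv c d q x : 0 < c -> 0 < d -> 0 < q <= 1 ->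
  forall n, (1 <= n)%nat -> snd x * snd (Rat c d q x n) >= snd x ^ 2.
Proof.
  intros Hc Hd Hq.
  assert (Step : forall n, snd x * snd (Rat c d q x n) >= 0 -> snd x * snd (Rat c d q x (S n)) >= snd x ^ 2).
  { intros n H. destruct (Rat_S_comp c d q x n) as [_ E]. rewrite E.
    pose proof (bcoef_nonneg c d q n Hc Hd Hq).
    set (g := Rat c d q x n) in *.
    assert (0 <= / (fst g ^ 2 + snd g ^ 2)) by (apply Rinv_nonneg; nra).
    unfold Rdiv. 
    assert (0 <= bcoef c d q n * (snd x * snd g) * / (fst g ^ 2 + snd g ^ 2)).
    { apply Rmult_le_pos; auto. apply Rmult_le_pos; lra. }
    nra. }
  intros n Hn. destruct n as [|n]; [lia|]. induction n as [|n IH].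
  - apply Step. simpl. lra.
  - apply Step. specialize (IH ltac:(lia)). nra.
Qed.

Lemma Cmod_lt_sq u v : Cmod u < Cmod v -> fst u ^ 2 + snd u ^ 2 < fst v ^ 2 + snd v ^ 2.
Proof. unfold Cmod. intros H. apply sqrt_lt_0_alt in H. auto. Qed.

Lemma root_facts (wp wm Ai : C) (Bi : R) : 0 < Bi ->
  Cplus wp wm = Ai -> Cmult wp wm = RtoC Bi -> Cmod wm < Cmod wp ->
  snd Ai * snd wm <= 0 /\
  (snd Ai = 0 -> snd wp = 0 /\ snd wm = 0 /\ fst wp * fst wm = Bi /\ fst wm ^ 2 < fst wp ^ 2).
Proof.
  intros HB HS HP HM. apply Cmod_lt_sq in HM.
  destruct wp as [a b], wm as [a' b']. subst Ai. unfold Cplus, Cmult, RtoC in *. cbn [fst snd] in *.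
  injection HP as E1 E2.
  set (N := a ^ 2 + b ^ 2) in *. set (N' := a' ^ 2 + b' ^ 2) in *.
  assert (HNN : N * N' = Bi ^ 2).
  { replace (Bi ^ 2) with ((a*a' - b*b')^2 + (a*b' + b*a')^2) by (rewrite E1, E2; ring).
    unfold N, N'; ring. }
  assert (HN0 : 0 <= N') by (unfold N'; nra).
  assert (HNB : Bi < N) by nra.
  assert (Hb' : b' * N = - b * Bi).
  { unfold N. rewrite <- E1. replace (b' * (a^2+b^2)) with (a * (a*b') + b'*b^2) by ring.
    replace (a*b') with (-(b*a')) by lra. ring. }
  split.
  - assert (H1 : b * (b + b') * N = b ^ 2 * (N - Bi)).
    { replace (b * (b + b') * N) with (b^2 * N + b * (b' * N)) by ring. rewrite Hb'. ring. }
    assert (H2 : (b + b') * b' * (N * N) = - Bi * (b * (b + b') * N)).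
    { replace ((b + b') * b' * (N * N)) with ((b + b') * N * (b' * N)) by ring. rewrite Hb'. ring. }
    rewrite H1 in H2.
    assert (0 <= b ^ 2 * (N - Bi)) by (apply Rmult_le_pos; nra).
    assert (0 < N * N) by nra.
    nra.
  - intros Hs. assert (b' = - b) by lra.
    assert (Hb0 : b = 0).
    { destruct (Req_dec b 0) as [Z|Z]; auto. exfalso.
      assert (a' = a).
      { apply (Rmult_eq_reg_l b); auto. subst b'. nra. }
      subst a' b'. unfold N, N' in HM. nra. }
    subst b. assert (b' = 0) by lra. subst b'.
    repeat split; try lra. unfold N, N' in HM. lra.
Qed.


Lemma real_key2 (al b q u v M W E delta : R) :
  0 < delta -> 0 <= u -> 0 <= v -> al = delta + u + v -> b * q = u * v -> 1/2 <= q <= 1 ->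
  u * v <= M -> u + v <= W -> 0 <= E -> 0 <= b ->
  (1 - q) * (8 * M + E * (delta + W)) <= delta ^ 2 ->
  al * al - 4 * b >= E * (1 - q) * al.
Proof.
  intros. assert (b * (2 * q - 1) >= 0) by (apply Rle_ge, Rmult_le_pos; lra).
  assert (b * (2 * q - 1) = 2 * (b * q) - b) by ring.
  assert (b <= 2 * (u * v)) by lra.
  assert (b = u * v + b * (1 - q)) by (replace (b * (1 - q)) with (b - b * q) by ring; lra).
  assert (b * (1 - q) <= 2 * M * (1 - q)) by (apply Rmult_le_compat_r; lra).
  assert (al * al >= delta ^ 2 + 4 * (u * v)).
  { subst al. assert (0 <= (u - v) * (u - v)) by apply Rle_0_sqr.
    assert (0 <= delta * (u + v)) by (apply Rmult_le_pos; lra). nra. }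
  assert (E * (1 - q) * al <= E * (1 - q) * (delta + W)).
  { apply Rmult_le_compat_l. nra. lra. }
  nra.
Qed.

Section RealCase.
Variables (c d q : R) (x : C) (delta sg : R).
Hypotheses (Hc : 0 < c) (Hd : 0 < d) (Hq : 1/2 <= q <= 1) (Hx : snd x = 0)
  (Hsg : sg = 1 \/ sg = -1) (Hdel : 0 < delta)
  (Hdec : forall t, 0 <= t <= 1 -> exists u v, 0 <= u /\ 0 <= v /\
      sg * (fst x - t * (c - d)) = delta + u + v /\ u * v = c * d * (t * (1 - t)) /\ u + v <= c + d)
  (Hq1 : (1 - q) * (8 * (c * d) + Rabs (c - d) * (delta + (c + d))) <= delta ^ 2)
  (Hq2 : (1 - q) * Rabs (c - d) <= delta).

Definition An (n : nat) : R := fst x - q ^ n * (c - d).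

Lemma qn_range n : 0 <= q ^ n <= 1.
Proof. split; [apply pow_le; lra| apply pow_le1; lra]. Qed.

Lemma An_ge n : sg * An n >= delta.
Proof.
  destruct (Hdec (q ^ n) (qn_range n)) as (u & v & Hu & Hv & E & _). unfold An. lra.
Qed.

Lemma An_step n : sg * An (S n) <= sg * An n + Rabs (c - d) * (1 - q).
Proof.
  unfold An. change (q ^ S n) with (q * q ^ n). pose proof (qn_range n).
  assert (sg * (fst x - q * q ^ n * (c - d)) = sg * (fst x - q ^ n * (c - d)) + sg * (q ^ n * (1 - q)) * (c - d)) by ring.
  rewrite H0. apply Rplus_le_compat_l.
  apply Rle_trans with (Rabs (sg * (q ^ n * (1 - q)) * (c - d))); [apply Rle_abs|].
  rewrite Rabs_mult, Rabs_mult, (Rabs_right (q ^ n * (1 - q))) by nra.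
  replace (Rabs sg) with 1 by (destruct Hsg; subst; unfold Rabs; destruct Rcase_abs; lra).
  rewrite Rmult_comm. apply Rmult_le_compat_l. apply Rabs_pos. nra.
Qed.

Lemma real_inv : forall n, (1 <= n)%nat ->
  snd (Rat c d q x n) = 0 /\ sg * fst (Rat c d q x n) >= sg * An n / 2.
Proof.
  intros n Hn. destruct n as [|n]; [lia|]. induction n as [|n IH].
  - destruct (Rat_S_comp c d q x 0) as [E1 E2]. rewrite E1, E2.
    unfold bcoef. simpl. split. lra.
    pose proof (An_step 0). pose proof (An_ge 0). unfold An in *. simpl in *.
    assert (Rabs (c - d) * (1 - q) <= delta) by lra. nra.
  - specialize (IH ltac:(lia)). destruct IH as [I1 I2].
    destruct (Rat_S_comp c d q x (S n)) as [E1 E2]. rewrite E1, E2.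
    set (g := Rat c d q x (S n)) in *. rewrite I1.
    split. lra.
    pose proof (An_ge (S n)) as HA. pose proof (An_step (S n)) as HS.
    set (al := sg * An (S n)) in *.
    assert (Hg : sg * fst g >= al / 2) by exact I2.
    assert (Hsg2 : sg * sg = 1) by (destruct Hsg; subst; ring).
    assert (Hg0 : fst g <> 0) by (intro Z; rewrite Z in Hg; lra).
    replace (fst g / (fst g ^ 2 + 0 ^ 2)) with (/ fst g) by (field; auto).
    destruct (Hdec (q ^ S n) (qn_range (S n))) as (u & v & Hu & Hv & Ea & Euv & Ew).
    assert (Hb : bcoef c d q (S n) * q = u * v).
    { unfold bcoef. rewrite Euv. replace (S n - 1)%nat with n by lia. simpl. ring. }
    assert (Hb0 : 0 <= bcoef c d q (S n)) by (apply bcoef_nonneg; lra).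
    set (b := bcoef c d q (S n)) in *.
    assert (Hal : al = delta + u + v) by (unfold al, An; rewrite <- Ea; ring).
    pose proof (qn_range (S n)) as Qr.
    assert (Huv : u * v <= c * d).
    { rewrite Euv. assert (q ^ S n * (1 - q ^ S n) <= 1) by nra.
      rewrite <- (Rmult_1_r (c * d)) at 2. apply Rmult_le_compat_l; nra. }
    pose proof (real_key2 al b q u v (c * d) (c + d) (Rabs (c - d)) delta Hdel Hu Hv Hal Hb Hq Huv Ew (Rabs_pos _) Hb0 Hq1) as K.
    assert (Eq : sg * (fst x - q ^ S n * (c - d) - b * / fst g) = al - b / (sg * fst g)).
    { unfold al, An. destruct Hsg as [S|S]; rewrite S; field; auto. }
    replace (fst x - q ^ S n * (c - d) - b * / fst g) with (fst x - q ^ S n * (c - d) - b * / fst g) by reflexivity.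
    rewrite Eq.
    assert (al > 0) by lra.
    assert (b / (sg * fst g) <= 2 * b / al).
    { replace (2 * b / al) with (b * / (al / 2)) by (field; lra).
      unfold Rdiv. apply Rmult_le_compat_l; auto. apply Rinv_le_contravar; lra. }
    assert (2 * b / al <= al / 2 - Rabs (c - d) * (1 - q) / 2).
    { apply Rmult_le_reg_r with (2 * al). lra.
      replace (2 * b / al * (2 * al)) with (4 * b) by (field; lra). nra. }
    lra.
Qed.

End RealCase.

Lemma pert_bound c d q x n (b r Bi mu : R) (v : C) : 0 < mu -> mu <= Cmod v ->
  Cmod (Cminus (Cminus (acoef c d q x n) (Cdiv (RtoC b) v))
               (Cminus (Cminus x (RtoC (r * (c - d)))) (Cdiv (RtoC Bi) v)))
  <= Rabs (q ^ n - r) * Rabs (c - d) + Rabs (b - Bi) / mu.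
Proof.
  intros Hmu Hv. assert (Hv0 : v <> RtoC 0).
  { intro E. rewrite E, Cmod_0 in Hv. lra. }
  replace (Cminus (Cminus (acoef c d q x n) (Cdiv (RtoC b) v))
               (Cminus (Cminus x (RtoC (r * (c - d)))) (Cdiv (RtoC Bi) v)))
    with (Cplus (RtoC ((r - q ^ n) * (c - d))) (Cdiv (RtoC (Bi - b)) v)).
  2:{ unfold acoef. rewrite !RtoC_mult, !RtoC_minus. field. auto. }
  eapply Rle_trans; [apply Cmod_triangle|].
  rewrite Cmod_R, Cmod_div, Cmod_R by auto.
  apply Rplus_le_compat.
  - rewrite Rabs_mult. right. f_equal. rewrite <- Rabs_Ropp. f_equal. ring.
  - unfold Rdiv. rewrite <- Rabs_Ropp. replace (- (Bi - b)) with (b - Bi) by ring.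
    apply Rmult_le_compat_l. apply Rabs_pos. apply Rinv_le_contravar; auto.
Qed.

Lemma bco_close c d q r n (e : R) : 0 < c -> 0 < d -> (1 <= n)%nat ->
  Rabs (q ^ (n - 1) - r) < e -> Rabs (q ^ n - r) < e -> 0 <= q <= 1 -> 0 < r < 1 ->
  Rabs (bcoef c d q n - r * c * d * (1 - r)) <= c * d * (e + e).
Proof.
  intros Hc Hd Hn H1 H2 Hq Hr. unfold bcoef.
  set (u := q ^ (n - 1)) in *. set (v := q ^ n) in *.
  assert (0 <= v <= 1) by (split; [apply pow_le; lra| apply pow_le1; lra]).
  replace (u * c * d * (1 - v) - r * c * d * (1 - r)) with (c * d * ((u - r) * (1 - v) + r * (r - v))) by ring.
  rewrite Rabs_mult, Rabs_right by nra. apply Rmult_le_compat_l. nra.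
  eapply Rle_trans; [apply Rabs_triang|]. rewrite !Rabs_mult.
  rewrite (Rabs_right (1 - v)) by lra. rewrite (Rabs_right r) by lra.
  rewrite <- Rabs_Ropp in H2. replace (- (v - r)) with (r - v) in H2 by ring.
  assert (Rabs (u - r) * (1 - v) <= Rabs (u - r)) by (pose proof (Rabs_pos (u - r)); nra).
  assert (r * Rabs (r - v) <= Rabs (r - v)) by (pose proof (Rabs_pos (r - v)); nra).
  lra.
Qed.

Lemma abs_from_prod s y : s <> 0 -> s * y >= s ^ 2 -> Rabs s <= Rabs y.
Proof.
  intros Hs H. destruct (Rlt_or_le 0 s) as [P|P].
  - assert (y >= s).
    { apply Rle_ge, Rmult_le_reg_l with s; [lra|]. simpl in H; lra. }
    rewrite !Rabs_right by lra. lra.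
  - assert (s < 0) by lra.
    assert (y <= s) by (apply Rmult_le_reg_l with (-s); [lra|]; simpl in H; lra).
    rewrite !Rabs_left by lra. lra.
Qed.

Lemma abs_sg sg z : sg = 1 \/ sg = -1 -> sg * z <= Rabs z.
Proof. intros [S|S]; rewrite S; unfold Rabs; destruct Rcase_abs; lra. Qed.

Section Main.
Variables (c d r : R) (x wp wm : C).
Hypotheses (Hc : 0 < c) (Hd : 0 < d) (Hr : 0 < r < 1)
  (hx : ~ (snd x = 0 /\ - d <= fst x <= c))
  (HS : Cplus wp wm = Cminus x (RtoC (r * (c - d))))
  (HP : Cmult wp wm = RtoC (r * c * d * (1 - r)))
  (HM : Cmod wm < Cmod wp).

Definition G (p n : nat) : C := Rat c d (qp r p) x n.

Lemma Binf_pos : 0 < r * c * d * (1 - r).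
Proof. apply Rmult_lt_0_compat; [|lra]. repeat apply Rmult_lt_0_compat; lra. Qed.

Lemma cases_P1 : exists eta mu, 0 < eta /\ 0 < mu /\
  (forall L, exists P, forall p idx, (P <= p)%nat -> (p <= idx + L)%nat -> (idx <= p + L)%nat ->
      eta <= Cmod (Cminus (G p idx) wm) /\ mu <= Cmod (G p idx)) /\
  (exists P, forall p j, (P <= p)%nat -> (1 <= j)%nat -> G p j <> RtoC 0).
Proof.
  destruct (root_facts wp wm _ _ Binf_pos HS HP HM) as [RF1 RF2].
  cbn [snd Cminus Cplus Copp RtoC] in RF1, RF2. unfold Cminus, Cplus, Copp, RtoC in RF1, RF2.
  cbn [fst snd] in RF1, RF2.
  destruct (Req_dec (snd x) 0) as [Hx0|Hx0].
  -
    assert (Ex : exists sg delta, (sg = 1 \/ sg = -1) /\ 0 < delta /\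
      (forall t, 0 <= t <= 1 -> exists u v, 0 <= u /\ 0 <= v /\
        sg * (fst x - t * (c - d)) = delta + u + v /\ u * v = c * d * (t * (1 - t)) /\ u + v <= c + d)).
    { destruct (Rlt_or_le c (fst x)) as [Hl|Hl].
      - exists 1, (fst x - c). split; [auto|]. split; [lra|].
        intros t Ht. exists (c * (1 - t)), (d * t). repeat split; try nra; ring.
      - assert (fst x < - d) by (destruct (Rlt_or_le (fst x) (-d)); auto; exfalso; apply hx; auto).
        exists (-1), (- d - fst x). split; [auto|]. split; [lra|].
        intros t Ht. exists (d * (1 - t)), (c * t). repeat split; try nra; ring. }
    destruct Ex as (sg & delta & Hsg & Hdel & Hdec).
    set (E := Rabs (c - d)). assert (HE : 0 <= E) by apply Rabs_pos.
    set (K := 8 * (c * d) + E * (delta + (c + d))).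
    assert (HK : 0 <= K) by (unfold K; assert (0 <= c * d) by nra; nra).
    set (eps0 := Rmin (1/2) (Rmin (delta ^ 2 / (K + 1)) (delta / (E + 1)))).
    assert (He0 : 0 < eps0).
    { unfold eps0. apply Rmin_glb_lt; [lra|]. apply Rmin_glb_lt; apply Rdiv_lt_0_compat; nra. }
    destruct (qp_to1 r Hr eps0 He0) as [P0 HP0].
    assert (Qc : forall p, (P0 <= p)%nat -> 1/2 <= qp r p <= 1 /\
        (1 - qp r p) * (8 * (c * d) + Rabs (c - d) * (delta + (c + d))) <= delta ^ 2 /\
        (1 - qp r p) * Rabs (c - d) <= delta).
    { intros p Hp. specialize (HP0 p Hp). pose proof (qp_le1 r p Hr).
      assert (e1 : eps0 <= 1/2) by apply Rmin_l.
      assert (e2 : eps0 <= delta ^ 2 / (K + 1)) by (eapply Rle_trans; [apply Rmin_r| apply Rmin_l]).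
      assert (e3 : eps0 <= delta / (E + 1)) by (eapply Rle_trans; [apply Rmin_r| apply Rmin_r]).
      fold E. fold K. split; [lra|]. split.
      - apply Rle_trans with (delta ^ 2 / (K + 1) * K).
        apply Rmult_le_compat_r; lra.
        apply Rmult_le_reg_r with (K + 1); [lra|].
        replace (delta ^ 2 / (K + 1) * K * (K + 1)) with (delta ^ 2 * K) by (field; lra).
        assert (0 <= delta ^ 2) by nra. nra.
      - apply Rle_trans with (delta / (E + 1) * E).
        apply Rmult_le_compat_r; lra.
        apply Rmult_le_reg_r with (E + 1); [lra|].
        replace (delta / (E + 1) * E * (E + 1)) with (delta * E) by (field; lra). nra. }
    assert (RI : forall p n, (P0 <= p)%nat -> (1 <= n)%nat ->
       snd (G p n) = 0 /\ sg * fst (G p n) >= sg * An c d (qp r p) x n / 2).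
    { intros p n Hp Hn. destruct (Qc p Hp) as (Q1 & Q2 & Q3).
      apply (real_inv c d (qp r p) x delta sg); auto. }
    assert (AG : forall p n, (P0 <= p)%nat -> sg * An c d (qp r p) x n >= delta).
    { intros p n Hp. destruct (Qc p Hp) as (Q1 & Q2 & Q3). apply (An_ge c d (qp r p) x delta sg); auto. }
    destruct (RF2 ltac:(lra)) as (W1 & W2 & W3 & W4).
    assert (HSf : fst wp + fst wm = fst x - r * (c - d)).
    { apply (f_equal fst) in HS. unfold Cminus, Cplus, Copp, RtoC in HS. cbn [fst snd] in HS. lra. }
    assert (HA : sg * (fst x - r * (c - d)) >= delta).
    { destruct (Hdec r ltac:(lra)) as (u & v & Hu & Hv & Ea & _). lra. }
    set (gap := sg * (fst x - r * (c - d)) / 2 - sg * fst wm).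
    assert (Hgap : 0 < gap).
    { unfold gap. pose proof Binf_pos. rewrite <- HSf in HA |- *.
      destruct Hsg as [S|S]; rewrite S in *; nra. }
    exists (gap / 2), (delta / 2). split; [lra|]. split; [lra|]. split.
    + intros L. destruct (qwin r Hr L (gap / 2 / (E + 1))) as [Pq HPq].
      { apply Rdiv_lt_0_compat; lra. }
      exists (Nat.max (Nat.max P0 Pq) (S L)). intros p idx H1 H2 H3.
      destruct (RI p idx ltac:(lia) ltac:(lia)) as [R1 R2].
      specialize (AG p idx ltac:(lia)). specialize (HPq p idx ltac:(lia) H2 H3).
      set (q := qp r p) in *.
      assert (Hz : sg * An c d q x idx >= sg * (fst x - r * (c - d)) - gap / 2).
      { unfold An. replace (sg * (fst x - q ^ idx * (c - d))) with
          (sg * (fst x - r * (c - d)) + sg * ((r - q ^ idx) * (c - d))) by ring.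
        assert (- (sg * ((r - q ^ idx) * (c - d))) <= Rabs ((r - q ^ idx) * (c - d))).
        { replace (- (sg * ((r - q ^ idx) * (c - d)))) with (sg * (- ((r - q ^ idx) * (c - d)))) by ring.
          rewrite <- (Rabs_Ropp ((r - q ^ idx) * (c - d))). apply abs_sg; auto. }
        rewrite Rabs_mult in H. fold E in H.
        rewrite <- Rabs_Ropp in H. replace (- (r - q ^ idx)) with (q ^ idx - r) in H by ring.
        assert (Rabs (q ^ idx - r) * E <= gap / 2 / (E + 1) * E).
        { apply Rmult_le_compat_r; lra. }
        assert (gap / 2 / (E + 1) * E <= gap / 2).
        { apply Rmult_le_reg_r with (E + 1); [lra|].
          replace (gap / 2 / (E + 1) * E * (E + 1)) with (gap / 2 * E) by (field; lra). nra. }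
        lra. }
      split.
      * eapply Rle_trans; [|apply re_le_Cmod]. unfold Cminus, Cplus, Copp. cbn [fst].
        eapply Rle_trans; [|apply (abs_sg sg); auto].
        unfold Re. cbn [fst].
        replace (sg * (fst (G p idx) + - fst wm)) with (sg * fst (G p idx) - sg * fst wm) by ring.
        unfold gap in *. lra.
      * eapply Rle_trans; [|apply re_le_Cmod].
        eapply Rle_trans; [|apply (abs_sg sg); auto]. unfold Re. lra.
    + exists P0. intros p j Hp Hj Ez. destruct (RI p j Hp Hj) as [_ R2].
      specialize (AG p j Hp). rewrite Ez in R2. simpl in R2. lra.
  -
    exists (Rabs (snd x)), (Rabs (snd x)).
    assert (Hs : 0 < Rabs (snd x)) by (apply Rabs_pos_lt; auto).
    assert (CI : forall p j, (1 <= j)%nat -> snd x * snd (G p j) >= snd x ^ 2).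
    { intros p j Hj. apply cplx_inv; auto. split. apply qp_pos. apply qp_le1; auto. }
    split; [auto|]. split; [auto|]. split.
    + intros L. exists (S L). intros p idx H1 H2 H3.
      specialize (CI p idx ltac:(lia)). split.
      * eapply Rle_trans; [|apply im_le_Cmod].
        apply abs_from_prod; auto. unfold Cminus, Cplus, Copp. cbn [snd].
        assert (snd x * snd wm <= 0) by lra. simpl in CI |- *. nra.
      * eapply Rle_trans; [|apply im_le_Cmod]. apply abs_from_prod; auto.
    + exists O. intros p j _ Hj E. specialize (CI p j Hj). rewrite E in CI. simpl in CI.
      assert (snd x * snd x > 0) by (apply Rsqr_pos_lt; auto). nra.
Qed.

Lemma conv_all : forall L eps, 0 < eps -> exists P, forall p idx, (P <= p)%nat ->
  (p <= idx + L)%nat -> (idx <= p + L)%nat -> Cmod (Cminus (G p idx) wp) < eps.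
Proof.
  destruct cases_P1 as (eta & mu & He & Hmu & H1 & _).
  apply (core _ _ wp wm HS HP HM G eta He).
  - intros L. destruct (H1 L) as [P HP1]. exists P. intros p idx Ha Hb Hc'.
    destruct (HP1 p idx Ha Hb Hc') as [X Y]. split; auto.
    intro E. rewrite E, Cmod_0 in Y. lra.
  - intros L eps Heps.
    set (E := Rabs (c - d)). assert (HE : 0 <= E) by apply Rabs_pos.
    assert (Hcd : 0 < c * d) by nra.
    set (e := eps / (E + 2 * (c * d) / mu + 1)).
    assert (HD : 0 < E + 2 * (c * d) / mu + 1).
    { assert (0 < 2 * (c * d) / mu) by (apply Rdiv_lt_0_compat; lra). lra. }
    assert (He' : 0 < e) by (apply Rdiv_lt_0_compat; lra).
    destruct (qwin r Hr (S L) e He') as [Pq HPq].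
    destruct (H1 L) as [P1 HP1].
    exists (Nat.max (Nat.max Pq P1) (S (S L))). intros p idx Ha Hb Hc'.
    destruct (HP1 p idx ltac:(lia) Hb Hc') as [_ Hm].
    pose proof (HPq p idx ltac:(lia) ltac:(lia) ltac:(lia)) as Q1.
    pose proof (HPq p (idx - 1)%nat ltac:(lia) ltac:(lia) ltac:(lia)) as Q2.
    pose proof (qp_pos r p). pose proof (qp_le1 r p Hr).
    pose proof (bco_close c d (qp r p) r idx e Hc Hd ltac:(lia) Q2 Q1 ltac:(lra) Hr) as Bc.
    change (G p (S idx)) with (Cminus (acoef c d (qp r p) x idx) (Cdiv (RtoC (bcoef c d (qp r p) idx)) (G p idx))).
    eapply Rle_lt_trans; [apply pert_bound with (mu := mu); auto|].
    fold E.
    apply Rle_lt_trans with (e * E + c * d * (e + e) / mu).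
    + apply Rplus_le_compat.
      * apply Rmult_le_compat_r; lra.
      * unfold Rdiv. apply Rmult_le_compat_r. left; apply Rinv_0_lt_compat; lra. auto.
    + replace (e * E + c * d * (e + e) / mu) with (e * (E + 2 * (c * d) / mu)) by (field; lra).
      apply Rlt_le_trans with (e * (E + 2 * (c * d) / mu + 1)).
      apply Rmult_lt_compat_l; lra.
      right. unfold e. field. split; [lra|].
      assert (0 <= E * mu) by (apply Rmult_le_pos; lra). lra.
Qed.

Lemma NZ_ev : exists P, forall p j, (P <= p)%nat -> (1 <= j)%nat -> G p j <> RtoC 0.
Proof. destruct cases_P1 as (eta & mu & _ & _ & _ & H). exact H. Qed.

End Main.

Definition conv (u : nat -> C) (l : C) := forall eps, 0 < eps -> exists P, forall p, (P <= p)%nat -> Cmod (Cminus (u p) l) < eps.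

Lemma conv_ext (u v : nat -> C) l : (exists P, forall p, (P <= p)%nat -> u p = v p) -> conv u l -> conv v l.
Proof.
  intros [P0 HP0] H eps He. destruct (H eps He) as [P HP]. exists (Nat.max P0 P).
  intros p Hp. rewrite <- HP0 by lia. apply HP; lia.
Qed.

Lemma conv_const l : conv (fun _ => l) l.
Proof. intros eps He. exists O. intros. replace (Cminus l l) with (RtoC 0) by (apply injective_projections; simpl; ring). rewrite Cmod_0; auto. Qed.

Lemma conv_mult u v a b : conv u a -> conv v b -> conv (fun p => Cmult (u p) (v p)) (Cmult a b).
Proof.
  intros Hu Hv eps He.
  set (M := Cmod a + Cmod b + 2).
  assert (HM : 0 < M) by (unfold M; pose proof (Cmod_ge_0 a); pose proof (Cmod_ge_0 b); lra).
  set (e := Rmin 1 (eps / M)).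
  assert (He1 : 0 < e) by (apply Rmin_glb_lt; [lra| apply Rdiv_lt_0_compat; lra]).
  destruct (Hu e He1) as [P1 HP1]. destruct (Hv e He1) as [P2 HP2].
  exists (Nat.max P1 P2). intros p Hp. specialize (HP1 p ltac:(lia)). specialize (HP2 p ltac:(lia)).
  replace (Cminus (Cmult (u p) (v p)) (Cmult a b)) with
    (Cplus (Cmult (Cminus (u p) a) (v p)) (Cmult a (Cminus (v p) b)))
    by (apply injective_projections; simpl; ring).
  eapply Rle_lt_trans; [apply Cmod_triangle|]. rewrite !Cmod_mult.
  assert (Cmod (v p) <= Cmod b + 1).
  { replace (v p) with (Cplus (Cminus (v p) b) b) by (apply injective_projections; simpl; ring).
    eapply Rle_trans; [apply Cmod_triangle|]. assert (e <= 1) by apply Rmin_l. lra. }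
  assert (e <= eps / M) by apply Rmin_r.
  assert (e * M <= eps) by (apply Rmult_le_reg_r with (/ M); [apply Rinv_0_lt_compat; lra|];
     replace (e * M * / M) with e by (field; lra); auto).
  pose proof (Cmod_ge_0 a). pose proof (Cmod_ge_0 (v p)).
  pose proof (Cmod_ge_0 (Cminus (u p) a)). pose proof (Cmod_ge_0 (Cminus (v p) b)).
  assert (Cmod (Cminus (u p) a) * Cmod (v p) <= e * (Cmod b + 1)) by (apply Rmult_le_compat; lra).
  assert (Cmod a * Cmod (Cminus (v p) b) <= Cmod a * e) by (apply Rmult_le_compat_l; lra).
  assert (Cmod (Cminus (u p) a) * Cmod (v p) + Cmod a * Cmod (Cminus (v p) b) < e * M).
  { unfold M. replace (e * (Cmod a + Cmod b + 2)) with (e * (Cmod b + 1) + Cmod a * e + e) by ring. lra. }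
  lra.
Qed.

Lemma conv_inv u a : conv u a -> a <> RtoC 0 -> conv (fun p => Cinv (u p)) (Cinv a).
Proof.
  intros Hu Ha eps He.
  assert (Ha0 : 0 < Cmod a) by (apply Cmod_gt_0; auto).
  set (e := Rmin (Cmod a / 2) (eps * (Cmod a * Cmod a) / 4)).
  assert (He1 : 0 < e) by (apply Rmin_glb_lt; [lra| apply Rdiv_lt_0_compat; [apply Rmult_lt_0_compat; [lra| apply Rmult_lt_0_compat; lra]|lra]]).
  destruct (Hu e He1) as [P HP]. exists P. intros p Hp. specialize (HP p Hp).
  assert (e1 : e <= Cmod a / 2) by apply Rmin_l.
  assert (e2 : e <= eps * (Cmod a * Cmod a) / 4) by apply Rmin_r.
  assert (Hup : Cmod a / 2 <= Cmod (u p)).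
  { assert (Cmod a <= Cmod (u p) + Cmod (Cminus a (u p))).
    { replace a with (Cplus (u p) (Cminus a (u p))) at 1 by (apply injective_projections; simpl; ring).
      apply Cmod_triangle. }
    replace (Cminus a (u p)) with (Copp (Cminus (u p) a)) in H by (apply injective_projections; simpl; ring).
    rewrite Cmod_opp in H. lra. }
  assert (Hu0 : u p <> RtoC 0) by (intro E; rewrite E, Cmod_0 in Hup; lra).
  replace (Cminus (Cinv (u p)) (Cinv a)) with (Cdiv (Copp (Cminus (u p) a)) (Cmult (u p) a)) by (field; auto).
  rewrite Cmod_div, Cmod_opp, Cmod_mult by (apply Cmult_neq_0; auto).
  apply Rle_lt_trans with (e / (Cmod a / 2 * Cmod a)).
  - unfold Rdiv. apply Rmult_le_compat; [apply Cmod_ge_0| left; apply Rinv_0_lt_compat; apply Rmult_lt_0_compat; lra | lra|].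
    apply Rinv_le_contravar; [apply Rmult_lt_0_compat; lra|]. apply Rmult_le_compat_r; lra.
  - apply Rle_lt_trans with (eps * (Cmod a * Cmod a) / 4 / (Cmod a / 2 * Cmod a)).
    unfold Rdiv at 1 3. apply Rmult_le_compat_r; [left; apply Rinv_0_lt_compat; apply Rmult_lt_0_compat; lra| lra].
    replace (eps * (Cmod a * Cmod a) / 4 / (Cmod a / 2 * Cmod a)) with (eps / 2) by (field; lra). lra.
Qed.

Lemma Cpow_neq0 w k : w <> RtoC 0 -> Cpow w k <> RtoC 0.
Proof.
  intros H. induction k; simpl. intro E. injection E. lra. apply Cmult_neq_0; auto.
Qed.

Section Ratio.
Variables (c d r : R) (x wp wm : C).
Hypotheses (Hc : 0 < c) (Hd : 0 < d) (Hr : 0 < r < 1)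
  (hx : ~ (snd x = 0 /\ - d <= fst x <= c))
  (HS : Cplus wp wm = Cminus x (RtoC (r * (c - d))))
  (HP : Cmult wp wm = RtoC (r * c * d * (1 - r)))
  (HM : Cmod wm < Cmod wp).

Let Ph p n := Phat c d (qp r p) x n.

Lemma wp_nz : wp <> RtoC 0.
Proof. intro E. rewrite E, Cmod_0 in HM. pose proof (Cmod_ge_0 wm). lra. Qed.

Lemma conv_idx (k : nat) (f : nat -> nat) :
  (forall p, (p <= f p + k)%nat /\ (f p <= p + k)%nat) -> conv (fun p => G c d r x p (f p)) wp.
Proof.
  intros Hf eps He. destruct (conv_all c d r x wp wm Hc Hd Hr hx HS HP HM k eps He) as [P HP0].
  exists P. intros p Hp. destruct (Hf p). apply HP0; auto.
Qed.

Lemma Ph_succ : exists P, forall p n, (P <= p)%nat ->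
  Ph p (S n) = Cmult (G c d r x p (S n)) (Ph p n) /\ Ph p n <> RtoC 0.
Proof.
  destruct (NZ_ev c d r x wp wm Hc Hd Hr hx HS HP HM) as [P HP0].
  exists P. intros p n Hp. apply Phat_succ. intros j Hj. apply (HP0 p j Hp Hj).
Qed.

Lemma ratio_pos (k : nat) : conv (fun p => Cdiv (Ph p (p + k)%nat) (Ph p p)) (Cpow wp k).
Proof.
  destruct Ph_succ as [P HP0].
  induction k as [|k IH].
  - apply conv_ext with (fun _ => RtoC 1); [|apply conv_const].
    exists P. intros p Hp. rewrite Nat.add_0_r. destruct (HP0 p p Hp) as [_ H]. field. auto.
  - apply conv_ext with (fun p => Cmult (G c d r x p (S (p + k))) (Cdiv (Ph p (p + k)%nat) (Ph p p))).
    + exists P. intros p Hp. rewrite Nat.add_succ_r. destruct (HP0 p (p + k)%nat Hp) as [E _].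
      destruct (HP0 p p Hp) as [_ N]. rewrite E. field. auto.
    + simpl. apply conv_mult; auto. apply (conv_idx (S k)). intros; lia.
Qed.

Lemma ratio_neg (k : nat) : conv (fun p => Cdiv (Ph p (p - k)%nat) (Ph p p)) (Cinv (Cpow wp k)).
Proof.
  destruct Ph_succ as [P HP0].
  induction k as [|k IH].
  - apply conv_ext with (fun _ => RtoC 1).
    + exists P. intros p Hp. rewrite Nat.sub_0_r. destruct (HP0 p p Hp) as [_ H]. field. auto.
    + simpl. replace (Cinv (RtoC 1)) with (RtoC 1) by (field). apply conv_const.
  - apply conv_ext with (fun p => Cmult (Cdiv (Ph p (p - k)%nat) (Ph p p)) (Cinv (G c d r x p (p - k)%nat))).
    + exists (Nat.max P (S k)). intros p Hp.
      destruct (HP0 p (p - S k)%nat ltac:(lia)) as [E N1].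
      replace (S (p - S k)) with (p - k)%nat in E by lia.
      destruct (HP0 p p ltac:(lia)) as [_ N]. rewrite E.
      assert (G c d r x p (p - k)%nat <> RtoC 0).
      { destruct (NZ_ev c d r x wp wm Hc Hd Hr hx HS HP HM) as [P' HP'].
        intro Z. rewrite Z in E. rewrite Cmult_0_l in E.
        destruct (HP0 p (p - k)%nat ltac:(lia)) as [_ N2]. auto. }
      field. auto.
    + simpl. replace (Cinv (Cmult wp (Cpow wp k))) with (Cmult (Cinv (Cpow wp k)) (Cinv wp)).
      2:{ pose proof wp_nz. pose proof (Cpow_neq0 wp k wp_nz). field. auto. }
      apply conv_mult; auto. apply conv_inv. apply (conv_idx k). intros; lia. apply wp_nz.
Qed.

End Ratio.

Lemma conv_filterlim (u : nat -> C) l : conv u l -> filterlim u eventually (locally l).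
Proof.
  intros H. apply filterlim_locally. intros eps.
  destruct (H eps (cond_pos eps)) as [P HP]. exists P. intros n Hn.
  apply C_NormedModule_mixin_compat1. exact (HP n Hn).
Qed.

Theorem mainTheorem8 (c d r : R) (m : Z) (x : C)
  (hc : 0 < c) (hd : 0 < d) (hr0 : 0 < r) (hr1 : r < 1)
  (hx : ~ (Im x = 0 /\ - d <= Re x <= c)) :
  let y : C := Cdiv (Cminus x (RtoC (r * (c - d))))
                    (RtoC (2 * sqrt (r * c * d * (1 - r)))) in
  forall s : C,
    Cmult s s = Cminus (Cmult y y) (RtoC 1) ->
    1 < Cmod (Cplus y s) ->
    filterlim
      (fun p : nat =>
         Cdiv (Phat_shift c d (Rpower r (/ INR p)) x p m)
              (Phat c d (Rpower r (/ INR p)) x p))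
      eventually
      (locally (Cmult (Cpowz (RtoC (sqrt (c * d * r * (1 - r)))) m)
                      (Cpowz (Cplus y s) m))).
Proof.
  intros y s Hs Hm.
  assert (Hr : 0 < r < 1) by lra.
  unfold Im, Re in hx.
  assert (HB : 0 < r * c * d * (1 - r)) by (apply Rmult_lt_0_compat; [|lra]; repeat apply Rmult_lt_0_compat; lra).
  set (be := sqrt (r * c * d * (1 - r))) in *.
  assert (Hbe : 0 < be) by (apply sqrt_lt_R0; auto).
  assert (Hbe2 : be * be = r * c * d * (1 - r)) by (apply sqrt_sqrt; lra).
  replace (sqrt (c * d * r * (1 - r))) with be by (unfold be; f_equal; ring).
  assert (Rbe : RtoC be <> RtoC 0) by (intro E; injection E; lra).
  assert (R2 : RtoC 2 <> RtoC 0) by (intro E; injection E; lra).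
  set (wp := Cmult (RtoC be) (Cplus y s)).
  set (wm := Cmult (RtoC be) (Cminus y s)).
  assert (HS : Cplus wp wm = Cminus x (RtoC (r * (c - d)))).
  { unfold wp, wm, y. rewrite (RtoC_mult 2 be). field. auto. }
  assert (HP : Cmult wp wm = RtoC (r * c * d * (1 - r))).
  { unfold wp, wm. rewrite <- Hbe2, RtoC_mult.
    replace (Cmult (Cmult (RtoC be) (Cplus y s)) (Cmult (RtoC be) (Cminus y s)))
      with (Cmult (Cmult (RtoC be) (RtoC be)) (Cminus (Cmult y y) (Cmult s s))) by ring.
    rewrite Hs. ring. }
  assert (Hys : Cmult (Cplus y s) (Cminus y s) = RtoC 1).
  { replace (Cmult (Cplus y s) (Cminus y s)) with (Cminus (Cmult y y) (Cmult s s)) by ring.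
    rewrite Hs. ring. }
  assert (HM : Cmod wm < Cmod wp).
  { unfold wp, wm. rewrite !Cmod_mult, Cmod_R, Rabs_right by lra.
    apply (f_equal Cmod) in Hys. rewrite Cmod_mult, Cmod_1 in Hys.
    pose proof (Cmod_ge_0 (Cminus y s)).
    assert (Cmod (Cminus y s) < 1) by nra.
    apply Rmult_lt_compat_l; lra. }
  assert (Hys0 : Cplus y s <> RtoC 0) by (intro E; rewrite E, Cmod_0 in Hm; lra).
  assert (Hwp0 : wp <> RtoC 0) by (unfold wp; apply Cmult_neq_0; auto).
  apply conv_filterlim.
  destruct m as [|k|k]; simpl Cpowz.
  - replace (Cmult (RtoC 1) (RtoC 1)) with (Cpow wp 0) by (simpl; ring).
    eapply conv_ext; [|apply (ratio_pos c d r x wp wm hc hd Hr hx HS HP HM 0)].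
    exists O. intros p _. unfold Phat_shift, qp. f_equal. f_equal. lia.
  - rewrite <- Cpow_mult_l. fold wp.
    eapply conv_ext; [|apply (ratio_pos c d r x wp wm hc hd Hr hx HS HP HM (Pos.to_nat k))].
    exists O. intros p _. unfold Phat_shift, qp. f_equal. f_equal. lia.
  - replace (Cmult (Cinv (Cpow (RtoC be) (Pos.to_nat k))) (Cinv (Cpow (Cplus y s) (Pos.to_nat k))))
      with (Cinv (Cpow wp (Pos.to_nat k))).
    2:{ unfold wp. rewrite Cpow_mult_l. pose proof (Cpow_neq0 _ (Pos.to_nat k) Rbe).
        pose proof (Cpow_neq0 _ (Pos.to_nat k) Hys0). field. auto. }
    eapply conv_ext; [|apply (ratio_neg c d r x wp wm hc hd Hr hx HS HP HM (Pos.to_nat k))].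
    exists O. intros p _. unfold Phat_shift, qp. f_equal. f_equal. lia.
Qed.
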